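(* For integers $k\ge0$ and $q\ge2$, \[ \sum_{n=0}^\infty\frac{P_k(H_n,H_n^{(2)},\dots,H_n^{(k)})}{(n+1)(n+2)\cdots(n+q)}=\frac{1}{(q-1)!}\cdot\frac{1}{(q-1)^{k+1}}. \]
   Context: For integers $r\ge1$ and $n\ge0$, $H_n^{(r)}=\sum_{j=1}^n j^{-r}$ (so $H_0^{(r)}=0$) and $H_n=H_n^{(1)}$. $P_0=1$ and for $n\ge1$, $P_n(y_1,\dots,y_n)=\sum_{m_1+2m_2+\cdots=n}\frac{(-1)^{m_2+m_4+\cdots}}{m_1!m_2!\cdots}\prod_{i\ge1}(y_i/i)^{m_i}$ (sum over tuples of nonnegative integers), i.e. $P_n(p_1,\dots,p_n)=e_n$ expresses the elementary symmetric function via power sums. *)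

(* Defs.v *)
From Stdlib Require Import Reals Arith.
Open Scope R_scope.

Fixpoint harm (r n : nat) : R :=
  match n with
  | O => 0
  | S n' => harm r n' + / (INR n ^ r)
  end.

(* Contribution of part-size l with multiplicity m in the definition of P_n:
   (-1)^(m if l is even) / m! * (y_l / l)^m. *)
Definition Pfactor (y : nat -> R) (l m : nat) : R :=
  (if Nat.even l then (-1) ^ m else 1) / INR (fact m) * (y l / INR l) ^ m.

Fixpoint sumR (M : nat) (f : nat -> R) : R :=
  match M with
  | O => f O
  | S M' => sumR M' f + f M
  end.

(* Pq y i r = sum over tuples (m_1,...,m_i) of nonnegative integers with
   m_1 + 2 m_2 + ... + i m_i = r of prod_{l=1}^i Pfactor y l m_l,
   computed by summing out m_i, then m_{i-1}, etc. *)
Fixpoint Pq (y : nat -> R) (i r : nat) : R :=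
  match i with
  | O => if Nat.eqb r 0 then 1 else 0
  | S i' => sumR r (fun m =>
              if Nat.leb (i * m) r then Pfactor y i m * Pq y i' (r - i * m) else 0)
  end.

(* P_n(y_1,...,y_n): for tuples with m_1+2m_2+... = n, m_l = 0 for l > n. P_0 = 1. *)
Definition P (n : nat) (y : nat -> R) : R := Pq y n n.

Fixpoint risingR (n q : nat) : R :=
  match q with
  | O => 1
  | S q' => risingR n q' * INR (n + q)
  end.

(* Main.v *)
Require Import Defs.
From Stdlib Require Import Reals Arith.
From Stdlib Require Import Lia Lra FunctionalExtensionality.
Open Scope R_scope.

Lemma sumR_ext M f g : (forall m, (m <= M)%nat -> f m = g m) -> sumR M f = sumR M g.
Proof. induction M; intros H; simpl. - apply H; lia. - rewrite IHM by (intros; apply H; lia). rewrite (H (S M)) by lia. reflexivity. Qed.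

Lemma sumR_plus M f g : sumR M (fun m => f m + g m) = sumR M f + sumR M g.
Proof. induction M; simpl; [ring| rewrite IHM; ring]. Qed.

Lemma sumR_scal M c f : sumR M (fun m => c * f m) = c * sumR M f.
Proof. induction M; simpl; [ring| rewrite IHM; ring]. Qed.

Lemma sumR_zero M f : (forall m, (m <= M)%nat -> f m = 0) -> sumR M f = 0.
Proof. induction M; intros H; simpl. - apply H; lia. - rewrite IHM by (intros; apply H; lia). rewrite (H (S M)) by lia. ring. Qed.

Lemma sumR_tail M r f : (r <= M)%nat -> (forall m, (r < m)%nat -> (m <= M)%nat -> f m = 0) -> sumR M f = sumR r f.
Proof. induction M; intros Hr H.
- assert (r = 0%nat) by lia; subst; reflexivity.
- destruct (Nat.eq_dec r (S M)) as [->|Hn]; [reflexivity|].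
  simpl. rewrite IHM by (try lia; intros; apply H; lia). rewrite (H (S M)) by lia. ring. Qed.

Lemma sumR_shift M f : sumR (S M) f = f 0%nat + sumR M (fun m => f (S m)).
Proof. induction M. - simpl; ring. - change (sumR (S (S M)) f) with (sumR (S M) f + f (S (S M))). rewrite IHM. simpl. ring. Qed.

Fixpoint sumL (i : nat) (g : nat -> R) : R :=
  match i with O => 0 | S i' => sumL i' g + g i end.

Lemma sumL_ext i f g : (forall l, (1 <= l)%nat -> (l <= i)%nat -> f l = g l) -> sumL i f = sumL i g.
Proof. induction i; intros H; simpl. - reflexivity. - rewrite IHi by (intros; apply H; lia). rewrite (H (S i)) by lia. reflexivity. Qed.

Lemma sumL_plus i f g : sumL i (fun m => f m + g m) = sumL i f + sumL i g.
Proof. induction i; simpl; [ring| rewrite IHi; ring]. Qed.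

Lemma sumL_scal i c f : sumL i (fun m => c * f m) = c * sumL i f.
Proof. induction i; simpl; [ring| rewrite IHi; ring]. Qed.

Lemma sumL_zero i f : (forall l, (1 <= l)%nat -> (l <= i)%nat -> f l = 0) -> sumL i f = 0.
Proof. intros H. rewrite (sumL_ext i f (fun _ => 0)) by exact H. induction i; simpl; [ring|rewrite IHi by (intros; apply H; lia); ring]. Qed.

Lemma sumL_sumR i M g : sumL i (fun l => sumR M (fun m => g l m)) = sumR M (fun m => sumL i (fun l => g l m)).
Proof. induction i; simpl.
- symmetry; apply sumR_zero; reflexivity.
- rewrite IHi, <- sumR_plus. reflexivity. Qed.

Lemma sumL_tel m u : sumL m (fun l => u l - u (S l)) = u 1%nat - u (S m).
Proof. induction m; simpl; [ring| rewrite IHm; ring]. Qed.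

Definition sg (l : nat) : R := if Nat.even l then -1 else 1.

Lemma sg_S l : sg (S l) = - sg l.
Proof. unfold sg. rewrite Nat.even_succ, <- Nat.negb_even. destruct (Nat.even l); simpl; ring. Qed.

Definition NS (Q : nat -> R) (y : nat -> R) i r :=
  sumL i (fun l => if Nat.leb l r then sg l * y l * Q (r - l)%nat else 0).

Lemma Pq_S y i r : Pq y (S i) r = sumR r (fun m =>
   if Nat.leb (S i * m) r then Pfactor y (S i) m * Pq y i (r - S i * m) else 0).
Proof. reflexivity. Qed.

Lemma INR_S_nz n : INR (S n) <> 0.
Proof. apply not_0_INR; lia. Qed.

Lemma fact_nz n : INR (fact n) <> 0.
Proof. apply not_0_INR. pose proof (lt_O_fact n); lia. Qed.

Lemma pow_S_helper (x:R) n : x ^ S n = x * x ^ n.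
Proof. reflexivity. Qed.

Lemma PF y i m : INR (S i * S m) * Pfactor y (S i) (S m) = sg (S i) * y (S i) * Pfactor y (S i) m.
Proof.
  unfold Pfactor, sg. change (fact (S m)) with (S m * fact m)%nat.
  rewrite !mult_INR. pose proof (INR_S_nz i). pose proof (INR_S_nz m). pose proof (fact_nz m).
  destruct (Nat.even (S i)); rewrite !pow_S_helper; field; auto.
Qed.

Lemma Pfactor0 y l : Pfactor y l 0 = 1.
Proof. unfold Pfactor. destruct (Nat.even l); simpl; field. Qed.

Lemma NA y i r : INR r * Pq y i r = NS (Pq y i) y i r.
Proof.
  revert r; induction i as [|i IH]; intros r.
  - unfold NS; simpl. destruct (Nat.eqb_spec r 0) as [->|Hr]; simpl; ring.
  - set (B := Pq y i). set (f := Pfactor y (S i)).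
    assert (E1 : INR r * Pq y (S i) r =
      sumR r (fun m => if Nat.leb (S i * m) r then INR (S i * m) * f m * B (r - S i * m)%nat else 0)
      + sumR r (fun m => if Nat.leb (S i * m) r then f m * (INR (r - S i * m) * B (r - S i * m)%nat) else 0)).
    { rewrite Pq_S, <- sumR_plus, <- sumR_scal. apply sumR_ext; intros m _.
      destruct (Nat.leb_spec0 (S i * m) r) as [H|H]; [|ring].
      replace (INR r) with (INR (S i * m) + INR (r - S i * m)) by (rewrite <- plus_INR; f_equal; lia).
      unfold f, B; ring. }
    assert (E2 : sumR r (fun m => if Nat.leb (S i * m) r then f m * (INR (r - S i * m) * B (r - S i * m)%nat) else 0)
                 = NS (Pq y (S i)) y i r).
    { transitivity (sumR r (fun m => sumL i (fun l =>
         if Nat.leb (S i * m + l) r then f m * (sg l * y l * B (r - S i * m - l)%nat) else 0))).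
      { apply sumR_ext; intros m _. destruct (Nat.leb_spec0 (S i * m) r) as [H|H].
        - unfold B; rewrite IH; fold B. unfold NS. rewrite <- sumL_scal. apply sumL_ext; intros l _ _.
          destruct (Nat.leb_spec0 l (r - S i * m)) as [H1|H1];
          destruct (Nat.leb_spec0 (S i * m + l) r) as [H2|H2]; try lia; ring.
        - symmetry; apply sumL_zero; intros l _ _. destruct (Nat.leb_spec0 (S i * m + l) r); [lia|ring]. }
      rewrite <- sumL_sumR. unfold NS. apply sumL_ext; intros l Hl _.
      destruct (Nat.leb_spec0 l r) as [H|H].
      - rewrite Pq_S. rewrite <- (sumR_tail r (r - l)) by (first [lia | intros m Hm _; cbv beta;
          destruct (Nat.leb_spec0 (S i * m) (r - l)); [nia|reflexivity]]).
        rewrite <- sumR_scal. symmetry.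
        apply sumR_ext; intros m _.
        destruct (Nat.leb_spec0 (S i * m) (r - l)) as [H1|H1];
        destruct (Nat.leb_spec0 (S i * m + l) r) as [H2|H2]; try lia.
        + replace (r - S i * m - l)%nat with (r - l - S i * m)%nat by lia. unfold f, B; ring.
        + ring.
      - apply sumR_zero; intros m _. destruct (Nat.leb_spec0 (S i * m + l) r); [lia|reflexivity]. }
    assert (E3 : sumR r (fun m => if Nat.leb (S i * m) r then INR (S i * m) * f m * B (r - S i * m)%nat else 0)
                 = if Nat.leb (S i) r then sg (S i) * y (S i) * Pq y (S i) (r - S i)%nat else 0).
    { destruct r as [|r].
      - simpl. rewrite Nat.mul_0_r. simpl. ring.
      - rewrite sumR_shift. rewrite Nat.mul_0_r. simpl (Nat.leb 0 (S r)). simpl (INR 0). rewrite Rmult_0_l, Rmult_0_l, Rplus_0_l.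
        destruct (Nat.leb_spec0 (S i) (S r)) as [Hi|Hi].
        + rewrite Pq_S. rewrite <- (sumR_tail r (S r - S i)) by (first [lia | intros m Hm _; cbv beta;
            destruct (Nat.leb_spec0 (S i * m) (S r - S i)); [nia|reflexivity]]).
          rewrite <- sumR_scal. symmetry.
          apply sumR_ext; intros m _.
          destruct (Nat.leb_spec0 (S i * m) (S r - S i)) as [H1|H1];
          destruct (Nat.leb_spec0 (S i * S m) (S r)) as [H2|H2]; try nia.
          * unfold f. rewrite PF. replace (S r - S i * S m)%nat with (S r - S i - S i * m)%nat by nia.
            unfold B; ring.
          * ring.
        + apply sumR_zero; intros m _. destruct (Nat.leb_spec0 (S i * S m) (S r)); [nia|reflexivity]. }
    rewrite E1, E2, E3. unfold NS. cbn [sumL]. ring.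
Qed.

Lemma Pq_stable y r d : Pq y (r + d) r = Pq y r r.
Proof.
  induction d. - rewrite Nat.add_0_r; reflexivity.
  - rewrite Nat.add_succ_r, Pq_S. rewrite (sumR_tail r 0) by (first [lia | intros m Hm _; cbv beta;
      destruct (Nat.leb_spec0 (S (r + d) * m) r); [nia|reflexivity]]).
    simpl sumR. rewrite Nat.mul_0_r. simpl Nat.leb. rewrite Pfactor0, Nat.sub_0_r. rewrite IHd. ring.
Qed.

Lemma P_newton y k : INR k * P k y = sumL k (fun l => sg l * y l * P (k - l)%nat y).
Proof.
  unfold P. rewrite NA. unfold NS. apply sumL_ext; intros l H1 H2.
  destruct (Nat.leb_spec0 l k); [|lia].
  rewrite <- (Pq_stable y (k - l) l). replace (k - l + l)%nat with k by lia. reflexivity.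
Qed.

Fixpoint el (n k : nat) : R :=
  match n with
  | O => match k with O => 1 | S _ => 0 end
  | S n' => el n' k + match k with O => 0 | S k' => el n' k' / INR n end
  end.

Lemma el_S0 n : el (S n) 0 = el n 0.
Proof. cbn [el]. ring. Qed.

Lemma el_SS n k : el (S n) (S k) = el n (S k) + el n k / INR (S n).
Proof. reflexivity. Qed.

Lemma el_n0 n : el n 0 = 1.
Proof. induction n; [reflexivity| rewrite el_S0; exact IHn]. Qed.

Lemma harm_S l n : harm l (S n) = harm l n + (/ INR (S n)) ^ l.
Proof. cbn [harm]. rewrite pow_inv. reflexivity. Qed.

Lemma TEL n k : sumL (S k) (fun l => sg l * (/ INR (S n)) ^ l * el (S n) (S k - l)%nat)
   = / INR (S n) * el n k.
Proof.
  set (x := / INR (S n)).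
  set (u := fun l => if Nat.leb l (S k) then sg l * x ^ l * el n (S k - l)%nat else 0).
  transitivity (sumL (S k) (fun l => u l - u (S l))).
  - apply sumL_ext; intros l H1 H2. unfold u.
    destruct (Nat.leb_spec0 l (S k)) as [_|]; [|lia].
    destruct (Nat.leb_spec0 (S l) (S k)) as [H3|H3].
    + replace (S k - l)%nat with (S (k - l)) by lia. replace (S k - S l)%nat with (k - l)%nat by lia.
      rewrite el_SS, sg_S. unfold x, Rdiv. rewrite pow_S_helper. ring.
    + assert (l = S k) by lia. subst l. rewrite Nat.sub_diag, el_S0. ring.
  - rewrite sumL_tel. unfold u.
    destruct (Nat.leb_spec0 1 (S k)); [|lia]. destruct (Nat.leb_spec0 (S (S k)) (S k)); [lia|].
    replace (S k - 1)%nat with k by lia. unfold sg; simpl. ring.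
Qed.

Lemma sumL_last m g : sumL (S m) (fun l => if Nat.leb l m then g l else 0) = sumL m g.
Proof.
  cbn [sumL]. destruct (Nat.leb_spec0 (S m) m); [lia|]. rewrite Rplus_0_r.
  apply sumL_ext; intros l _ H. destruct (Nat.leb_spec0 l m); [reflexivity|lia].
Qed.

Lemma Newton_e n k : INR k * el n k = sumL k (fun l => sg l * harm l n * el n (k - l)%nat).
Proof.
  revert k; induction n as [|n IH]; intros k.
  - destruct k as [|k].
    + simpl. ring.
    + symmetry. rewrite Rmult_0_r. apply sumL_zero; intros l _ _. simpl harm. ring.
  - destruct k as [|k]. { simpl. ring. }
    set (x := / INR (S n)).
    transitivity (sumL (S k) (fun l => sg l * harm l n * el (S n) (S k - l)%nat)
                + sumL (S k) (fun l => sg l * x ^ l * el (S n) (S k - l)%nat)).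
    2:{ rewrite <- sumL_plus. apply sumL_ext; intros l _ _. rewrite harm_S. fold x. ring. }
    unfold x; rewrite TEL. fold x.
    transitivity (sumL (S k) (fun l => sg l * harm l n * el n (S k - l)%nat)
      + x * sumL (S k) (fun l => if Nat.leb l k then sg l * harm l n * el n (k - l)%nat else 0) + x * el n k).
    2:{ f_equal. rewrite <- sumL_scal, <- sumL_plus. apply sumL_ext; intros l _ H.
        destruct (Nat.leb_spec0 l k) as [H1|H1].
        - replace (S k - l)%nat with (S (k - l)) by lia. rewrite el_SS. unfold x, Rdiv. ring.
        - assert (l = S k) by lia. subst l. rewrite Nat.sub_diag, el_S0. ring. }
    rewrite sumL_last, <- IH, <- IH. rewrite el_SS. unfold x, Rdiv.
    rewrite S_INR. ring.
Qed.

Lemma P_el n k : P k (fun l => harm l n) = el n k.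
Proof.
  induction k as [k IHk] using lt_wf_ind.
  destruct k as [|k].
  - rewrite el_n0. reflexivity.
  - apply Rmult_eq_reg_l with (INR (S k)); [|apply INR_S_nz].
    rewrite P_newton, Newton_e. apply sumL_ext; intros l H1 H2.
    rewrite IHk by lia. reflexivity.
Qed.

Lemma rising_ge1 n p : 1 <= risingR n p.
Proof.
  induction p; simpl; [lra|].
  assert (1 <= INR (n + S p)) by (replace 1 with (INR 1) by reflexivity; apply le_INR; lia).
  nra.
Qed.

Lemma rising_nz n p : risingR n p <> 0.
Proof. pose proof (rising_ge1 n p); lra. Qed.

Lemma rising_geS n p : (1 <= p)%nat -> INR (S n) <= risingR n p.
Proof.
  intros Hp. destruct p as [|p]; [lia|]. simpl risingR.
  pose proof (rising_ge1 n p).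
  assert (INR (S n) <= INR (n + S p)) by (apply le_INR; lia).
  assert (0 <= INR (S n)) by apply pos_INR. nra.
Qed.

Lemma rising_shift n p : risingR n (S p) = INR (S n) * risingR (S n) p.
Proof.
  induction p.
  - change (risingR n 1) with (1 * INR (n + 1)). change (risingR (S n) 0) with 1. rewrite Nat.add_1_r. ring.
  - change (risingR n (S (S p))) with (risingR n (S p) * INR (n + S (S p))).
    rewrite IHp. change (risingR (S n) (S p)) with (risingR (S n) p * INR (S n + S p)).
    replace (n + S (S p))%nat with (S n + S p)%nat by lia. ring.
Qed.

Lemma rising_0 p : risingR 0 p = INR (fact p).
Proof.
  induction p; [reflexivity|].
  change (risingR 0 (S p)) with (risingR 0 p * INR (0 + S p)). rewrite IHp.
  change (fact (S p)) with (S p * fact p)%nat. rewrite mult_INR. simpl (0 + S p)%nat. ring.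
Qed.

Lemma L1 n p : INR p / risingR n (S p) = / risingR n p - / risingR (S n) p.
Proof.
  assert (H1 : risingR n (S p) = risingR n p * INR (n + S p)) by reflexivity.
  assert (H2 := rising_shift n p).
  assert (H3 : INR (n + S p) = INR (S n) + INR p) by (rewrite <- plus_INR; f_equal; lia).
  assert (HB : risingR (S n) p = risingR n p * (INR (S n) + INR p) / INR (S n)).
  { rewrite <- H3, <- H1, H2. field. apply INR_S_nz. }
  pose proof (rising_nz n p). pose proof (INR_S_nz n).
  assert (0 <= INR p) by apply pos_INR. assert (0 < INR (S n)) by (apply lt_0_INR; lia).
  rewrite H1, H3, HB. field. repeat split; try lra.
Qed.

Lemma TELS p (a b : nat -> R) : (forall n, a (S n) = a n + b n / INR (S n)) -> forall N,
  INR p * sum_f_R0 (fun n => a n / risingR n (S p)) N + a (S N) / risingR (S N) p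
  = a 0%nat / risingR 0 p + sum_f_R0 (fun n => b n / risingR n (S p)) N.
Proof.
  intros Ha N. induction N.
  - cbn [sum_f_R0].
    replace (INR p * (a 0%nat / risingR 0 (S p))) with (a 0%nat * (INR p / risingR 0 (S p))) by (unfold Rdiv; ring).
    rewrite L1, Ha, rising_shift. pose proof (rising_nz 0 p). pose proof (rising_nz 1 p).
    simpl INR. field. auto.
  - change (sum_f_R0 (fun n => a n / risingR n (S p)) (S N)) with
      (sum_f_R0 (fun n => a n / risingR n (S p)) N + a (S N) / risingR (S N) (S p)).
    change (sum_f_R0 (fun n => b n / risingR n (S p)) (S N)) with
      (sum_f_R0 (fun n => b n / risingR n (S p)) N + b (S N) / risingR (S N) (S p)).
    rewrite <- Rplus_assoc, <- IHN.
    replace (INR p * (sum_f_R0 (fun n => a n / risingR n (S p)) N + a (S N) / risingR (S N) (S p)))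
      with (INR p * sum_f_R0 (fun n => a n / risingR n (S p)) N + a (S N) * (INR p / risingR (S N) (S p)))
      by (unfold Rdiv; ring).
    rewrite L1, (Ha (S N)), (rising_shift (S N) p).
    pose proof (rising_nz (S N) p). pose proof (rising_nz (S (S N)) p). pose proof (INR_S_nz (S N)).
    field. auto.
Qed.

Lemma cv_ext u v l : (forall n, u n = v n) -> Un_cv u l -> Un_cv v l.
Proof. intros H Hu eps He. destruct (Hu eps He) as [N HN]. exists N. intros n Hn. rewrite <- H. auto. Qed.

Lemma cv_const c : Un_cv (fun _ => c) c.
Proof. intros eps He. exists 0%nat. intros. unfold Rdist. rewrite Rminus_diag, Rabs_R0. lra. Qed.

Lemma cv_shift u l : Un_cv u l -> Un_cv (fun n => u (S n)) l.
Proof. intros Hu eps He. destruct (Hu eps He) as [N HN]. exists N. intros n Hn. apply HN. lia. Qed.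

Lemma squeeze u v : (forall N, (1 <= N)%nat -> 0 <= u N <= v N) -> Un_cv v 0 -> Un_cv u 0.
Proof.
  intros H Hv eps He. destruct (Hv eps He) as [N HN]. exists (S N). intros n Hn.
  specialize (HN n ltac:(lia)). specialize (H n ltac:(lia)). unfold Rdist in *.
  rewrite Rminus_0_r in *. rewrite Rabs_pos_eq in * by lra. lra.
Qed.

Lemma el_nonneg n k : 0 <= el n k.
Proof.
  revert k; induction n; intros k; destruct k.
  - simpl; lra.
  - simpl; lra.
  - rewrite el_S0. apply IHn.
  - rewrite el_SS. pose proof (IHn (S k)). pose proof (IHn k).
    assert (0 < INR (S n)) by (apply lt_0_INR; lia).
    assert (0 <= el n k / INR (S n)) by (unfold Rdiv; apply Rmult_le_pos; [lra| left; apply Rinv_0_lt_compat; lra]).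
    lra.
Qed.

Lemma el_sum M k : el (S M) (S k) = sum_f_R0 (fun n => el n k / INR (S n)) M.
Proof.
  induction M.
  - rewrite el_SS. cbn [sum_f_R0 el]. ring.
  - rewrite el_SS, IHM. reflexivity.
Qed.

Lemma inv_cv : Un_cv (fun N => / INR (S N)) 0.
Proof.
  intros eps He. destruct (archimed_cor1 eps He) as [N [HN HN0]]. exists N. intros n Hn.
  unfold Rdist. rewrite Rminus_0_r.
  assert (0 < INR N) by (apply lt_0_INR; lia).
  assert (INR N <= INR (S n)) by (apply le_INR; lia).
  assert (0 < / INR (S n)) by (apply Rinv_0_lt_compat; lra).
  rewrite Rabs_pos_eq by lra. eapply Rle_lt_trans; [|exact HN].
  apply Rinv_le_contravar; lra.
Qed.

Lemma Zk k : Un_cv (fun N => el N k / INR (S N)) 0.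
Proof.
  induction k.
  - apply (cv_ext (fun N => / INR (S N))); [intros; rewrite el_n0; unfold Rdiv; ring| apply inv_cv].
  - apply (squeeze _ (fun N => sum_f_R0 (fun n => el n k / INR (S n)) (pred N) / INR N)).
    2: apply Cesaro_1; exact IHk.
    intros N HN. destruct N as [|M]; [lia|]. rewrite el_sum. simpl pred.
    set (X := sum_f_R0 (fun n => el n k / INR (S n)) M).
    assert (0 <= X) by (unfold X; rewrite <- el_sum; apply el_nonneg).
    assert (0 < INR (S M)) by (apply lt_0_INR; lia).
    assert (INR (S M) <= INR (S (S M))) by (apply le_INR; lia).
    split; unfold Rdiv.
    + apply Rmult_le_pos; [lra| left; apply Rinv_0_lt_compat; lra].
    + apply Rmult_le_compat_l; [lra|]. apply Rinv_le_contravar; lra.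
Qed.

Lemma BD k p : (1 <= p)%nat -> Un_cv (fun N => el (S N) k / risingR (S N) p) 0.
Proof.
  intros Hp. apply (squeeze _ (fun N => el (S N) k / INR (S (S N)))).
  2: apply (cv_shift (fun N => el N k / INR (S N))), Zk.
  intros N _. pose proof (el_nonneg (S N) k). pose proof (rising_geS (S N) p Hp).
  assert (0 < INR (S (S N))) by (apply lt_0_INR; lia).
  split; unfold Rdiv.
  + apply Rmult_le_pos; [lra| left; apply Rinv_0_lt_compat; lra].
  + apply Rmult_le_compat_l; [lra|]. apply Rinv_le_contravar; lra.
Qed.

Lemma GEN p (a b : nat -> R) L : (1 <= p)%nat -> (forall n, a (S n) = a n + b n / INR (S n)) ->
  Un_cv (fun N => sum_f_R0 (fun n => b n / risingR n (S p)) N) L ->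
  Un_cv (fun N => a (S N) / risingR (S N) p) 0 ->
  Un_cv (fun N => sum_f_R0 (fun n => a n / risingR n (S p)) N) ((a 0%nat / risingR 0 p + L - 0) * / INR p).
Proof.
  intros Hp Ha HL HB.
  assert (Hnz : INR p <> 0) by (apply not_0_INR; lia).
  apply (cv_ext (fun N => (a 0%nat / risingR 0 p + sum_f_R0 (fun n => b n / risingR n (S p)) N
                          - a (S N) / risingR (S N) p) * / INR p)).
  - intros N. rewrite <- (TELS p a b Ha N). field. split; [exact Hnz| apply rising_nz].
  - apply (CV_mult (fun N => a 0%nat / risingR 0 p + sum_f_R0 (fun n => b n / risingR n (S p)) N
                          - a (S N) / risingR (S N) p) (fun _ => / INR p)); [|apply cv_const].
    apply (CV_minus (fun N => a 0%nat / risingR 0 p + sum_f_R0 (fun n => b n / risingR n (S p)) N)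
                    (fun N => a (S N) / risingR (S N) p)); [|exact HB].
    apply (CV_plus (fun _ => a 0%nat / risingR 0 p)); [apply cv_const|exact HL].
Qed.

Lemma MAIN k p : (1 <= p)%nat ->
  Un_cv (fun N => sum_f_R0 (fun n => el n k / risingR n (S p)) N) (/ INR (fact p) * / (INR p ^ (k + 1))).
Proof.
  intros Hp. assert (Hnz : INR p <> 0) by (apply not_0_INR; lia). pose proof (fact_nz p).
  induction k.
  - pose proof (GEN p (fun n => el n 0) (fun _ => 0) 0 Hp) as G.
    replace (/ INR (fact p) * / (INR p ^ (0 + 1))) with ((el 0 0 / risingR 0 p + 0 - 0) * / INR p).
    2:{ rewrite rising_0. simpl. field. auto. }
    apply G.
    + intros n. rewrite el_S0. unfold Rdiv. ring.
    + apply (cv_ext (fun _ => 0)); [|apply cv_const]. intros N. induction N; cbn [sum_f_R0]; [unfold Rdiv; ring|].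
      rewrite <- IHN. unfold Rdiv; ring.
    + apply BD; exact Hp.
  - pose proof (GEN p (fun n => el n (S k)) (fun n => el n k) (/ INR (fact p) * / (INR p ^ (k + 1))) Hp) as G.
    replace (/ INR (fact p) * / (INR p ^ (S k + 1))) with
      ((el 0 (S k) / risingR 0 p + (/ INR (fact p) * / (INR p ^ (k + 1))) - 0) * / INR p).
    2:{ simpl el. replace (S k + 1)%nat with (S (k + 1)) by lia. rewrite pow_S_helper.
        pose proof (pow_nonzero (INR p) (k+1) Hnz). pose proof (rising_nz 0 p). field. auto. }
    apply G.
    + intros n. apply el_SS.
    + exact IHk.
    + apply BD; exact Hp.
Qed.

Theorem theorem6 (k q : nat) (hq : (2 <= q)%nat) :
  infinite_sum
    (fun n : nat => P k (fun l => harm l n) / risingR n q)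
    (/ INR (fact (q - 1)) * / (INR (q - 1) ^ (k + 1))).
Proof.
  destruct q as [|p]; [lia|]. replace (S p - 1)%nat with p by lia.
  replace (fun n : nat => P k (fun l => harm l n) / risingR n (S p))
    with (fun n : nat => el n k / risingR n (S p))
    by (apply functional_extensionality; intro n; rewrite P_el; reflexivity).
  exact (MAIN k p ltac:(lia)).
Qed.
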